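(* Let $H$ be a subgroup of index $m$ in a group $G$, and let $M$ be a free $\mathbb ZH$-module of rank at most $m$. Then $M\rtimes H$ embeds as a subgroup of the wreath product $\mathbb Z\wr G$.
   Context: $H$ acts on the free $\mathbb ZH$-module $M$ by left multiplication, and $M\rtimes H$ is $M\times H$ with $(m,h)(m',h')=(m+hm',hh')$. The (restricted) wreath product $\mathbb Z\wr G$ is the semidirect product $\mathbb ZG\rtimes G$, with $G$ acting on the group ring $\mathbb ZG$ by left multiplication. *)

(* Defs.v *)
From Stdlib Require Import ZArith List.
Open Scope Z_scope.

Record Group := {
  gcar :> Type;
  gmul : gcar -> gcar -> gcar;
  gone : gcar;
  ginv : gcar -> gcar;
  gmulA : forall x y z, gmul x (gmul y z) = gmul (gmul x y) z;
  gmul1l : forall x, gmul gone x = x;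
  gmulVl : forall x, gmul (ginv x) x = gone }.

Arguments gmul {g}. Arguments gone {g}. Arguments ginv {g}.

Record is_subgroup (G : Group) (H : G -> Prop) : Prop := {
  sg_one : H gone;
  sg_mul : forall x y, H x -> H y -> H (gmul x y);
  sg_inv : forall x, H x -> H (ginv x) }.

(** [|I| <= [G:H]]: an injection of I into the set of left cosets gH. *)
Definition card_le_index (G : Group) (H : G -> Prop) (I : Type) : Prop :=
  exists r : I -> G, forall i j, H (gmul (ginv (r i)) (r j)) -> i = j.

Definition fsupp {T : Type} (f : T -> Z) : Prop :=
  exists l : list T, forall t, f t <> 0 -> In t l.

(** The wreath product Z wr G = ZG x| G.  Elements of ZG are finitely
    supported functions G -> Z (f = sum_x f(x) x); G acts by left
    multiplication: (g.f)(x) = f(g^-1 x). *)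
Definition wr_carrier (G : Group) (p : (G -> Z) * G) : Prop := fsupp (fst p).

Definition wr_mul (G : Group) (p q : (G -> Z) * G) : (G -> Z) * G :=
  (fun x => fst p x + fst q (gmul (ginv (snd p)) x), gmul (snd p) (snd q)).

(** The free ZH-module with basis I: M = (+)_{i in I} ZH, i.e. finitely
    supported functions I x H -> Z; here ZH is realised inside ZG as the
    functions supported on H.  The semidirect product M x| H has product
    (m,h)(m',h') = (m + h m', h h') with H acting by left multiplication. *)
Definition free_elt (G : Group) (H : G -> Prop) (I : Type) (m : I -> G -> Z) : Prop :=
  (exists l : list (I * G), forall i x, m i x <> 0 -> In (i, x) l) /\
  (forall i x, m i x <> 0 -> H x).

Definition sd_carrier (G : Group) (H : G -> Prop) (I : Type)
  (p : (I -> G -> Z) * G) : Prop := free_elt G H I (fst p) /\ H (snd p).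

Definition sd_mul (G : Group) (I : Type) (p q : (I -> G -> Z) * G) : (I -> G -> Z) * G :=
  (fun i x => fst p i x + fst q i (gmul (ginv (snd p)) x), gmul (snd p) (snd q)).

Definition sd_embeds_in_wreath (G : Group) (H : G -> Prop) (I : Type) : Prop :=
  exists phi : (I -> G -> Z) * G -> (G -> Z) * G,
    (forall p, sd_carrier G H I p -> wr_carrier G (phi p)) /\
    (forall p q, sd_carrier G H I p -> sd_carrier G H I q ->
        phi (sd_mul G I p q) = wr_mul G (phi p) (phi q)) /\
    (forall p q, sd_carrier G H I p -> sd_carrier G H I q ->
        phi p = phi q -> p = q).

(* Main.v *)
Require Import Defs.
From Stdlib Require Import ZArith List.
From Stdlib Require Import ClassicalEpsilon FunctionalExtensionality.

Section GL.
Variable G : Group.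
Lemma gmulV (x : G) : gmul x (ginv x) = gone.
Proof.
  assert (Y : gmul (gmul x (ginv x)) (gmul x (ginv x)) = gmul x (ginv x)).
  { rewrite <- gmulA, (gmulA G (ginv x)), gmulVl, gmul1l. reflexivity. }
  rewrite <- (gmul1l G (gmul x (ginv x))).
  rewrite <- (gmulVl G (gmul x (ginv x))) at 1.
  rewrite <- gmulA, Y. apply gmulVl.
Qed.
Lemma gmul1r (x : G) : gmul x gone = x.
Proof. rewrite <- (gmulVl G x), gmulA, gmulV, gmul1l. reflexivity. Qed.
Lemma ginv_mul (a b : G) : gmul (ginv (gmul a b)) (gmul a b) = gone.
Proof. apply gmulVl. Qed.
Lemma key (x a b : G) : gmul (ginv (gmul x a)) (gmul x b) = gmul (ginv a) b.
Proof.
  assert (E : ginv (gmul x a) = gmul (ginv a) (ginv x)).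
  { symmetry. rewrite <- (gmul1l G (gmul (ginv a) (ginv x))).
    rewrite <- (gmulVl G (gmul x a)).
    rewrite <- gmulA. rewrite <- (gmulA G x a), (gmulA G a), gmulV, gmul1l, gmulV, gmul1r.
    reflexivity. }
  rewrite E, <- gmulA, (gmulA G (ginv x)), gmulVl, gmul1l. reflexivity.
Qed.
End GL.

Theorem lemma2 (G : Group) (H : G -> Prop) (HH : is_subgroup G H)
  (I : Type) (hrank : card_le_index G H I) :
  sd_embeds_in_wreath G H I.
Proof.
  destruct hrank as [r Hr].
  assert (uniq : forall x i j, H (gmul x (r i)) -> H (gmul x (r j)) -> i = j).
  { intros x i j Hi Hj. apply Hr. rewrite <- (key G x).
    apply (sg_mul _ _ HH); [apply (sg_inv _ _ HH)|]; assumption. }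
  pose (ch := fun x : G => match excluded_middle_informative (exists i, H (gmul x (r i))) with
              | left e => Some (proj1_sig (constructive_indefinite_description _ e))
              | right _ => None end).
  assert (chS : forall x i, H (gmul x (r i)) -> ch x = Some i).
  { intros x i Hi. unfold ch. destruct excluded_middle_informative as [e|n].
    - destruct constructive_indefinite_description as [j Hj]. simpl. f_equal. eauto.
    - exfalso; eauto. }
  assert (chN : forall x, (forall i, ~ H (gmul x (r i))) -> ch x = None).
  { intros x Hn. unfold ch. destruct excluded_middle_informative as [[i e]|n]; [|reflexivity].
    exfalso; eapply Hn; eauto. }
  assert (chP : forall x, (exists i, ch x = Some i /\ H (gmul x (r i))) \/
                          (ch x = None /\ forall i, ~ H (gmul x (r i)))).
  { intros x. destruct (classic (exists i, H (gmul x (r i)))) as [[i Hi]|n].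
    - left. exists i. split; auto.
    - right. split; [apply chN|]; intros i Hi; apply n; eauto. }
  exists (fun p => (fun x => match ch x with Some i => fst p i (gmul x (r i)) | None => 0 end, snd p)).
  split; [|split].
  - intros [m h] [[[l Hl] Hs] Hh]. unfold wr_carrier, fsupp; simpl.
    exists (map (fun iy => gmul (snd iy) (ginv (r (fst iy)))) l).
    intros x Hx. destruct (ch x) as [i|] eqn:E; [|congruence].
    apply in_map_iff. exists (i, gmul x (r i)). split; [|apply Hl; exact Hx].
    simpl. rewrite <- gmulA, gmulV, gmul1r. reflexivity.
  - intros [m h] [m' h'] [[_ Hs] Hh] [[_ Hs'] Hh']. unfold sd_mul, wr_mul; simpl.
    f_equal. apply functional_extensionality. intros x.
    destruct (chP x) as [[i [E Hi]]|[E Hn]]; rewrite E.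
    + rewrite (chS (gmul (ginv h) x) i).
      * rewrite gmulA. reflexivity.
      * rewrite <- gmulA. apply (sg_mul _ _ HH); [apply (sg_inv _ _ HH)|]; assumption.
    + rewrite chN; [reflexivity|]. intros i Hi. apply (Hn i).
      replace (gmul x (r i)) with (gmul h (gmul (gmul (ginv h) x) (r i))).
      * apply (sg_mul _ _ HH); assumption.
      * rewrite !gmulA, gmulV, gmul1l. reflexivity.
  - intros [m h] [m' h'] [[_ Hs] Hh] [[_ Hs'] Hh'] Heq. simpl in *.
    injection Heq as Hf Hhh. subst h'. f_equal.
    apply functional_extensionality; intros i.
    apply functional_extensionality; intros y.
    destruct (classic (H y)) as [Hy|Hy].
    + pose proof (f_equal (fun f => f (gmul y (ginv (r i)))) Hf) as Q. simpl in Q.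
      assert (Ey : gmul (gmul y (ginv (r i))) (r i) = y).
      { rewrite <- gmulA, gmulVl, gmul1r. reflexivity. }
      rewrite (chS _ i) in Q by (rewrite Ey; exact Hy). rewrite Ey in Q. exact Q.
    + destruct (Z.eq_dec (m i y) 0) as [e|e]; [|exfalso; eauto].
      destruct (Z.eq_dec (m' i y) 0) as [e'|e']; [congruence|exfalso; eauto].
Qed.
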